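(* Let $K>0$, $S=1/K$, and let $\eta:(0,K]\to[0,\infty)$ with $\eta(K)=0$; set $\phi(k)=k\eta(k)$ (with $\phi(0)=0$) and $\theta(s)=\eta(1/s)$ for $s\ge S$. Let $\Delta t,\Delta N>0$ and consider a platoon of vehicles $m=0,1,\dots,M$ ($M\ge 1$), vehicle $m-1$ being the leader of vehicle $m$, with positions $Y_m^j$ at times $j\Delta t$. The lead vehicle $0$ follows an arbitrary prescribed trajectory with $Y_0^{j+1}\ge Y_0^j$ for all $j$, and for $m\ge1$ $$Y_m^{j+1}=Y_m^j+\Delta t\,\theta\!\left(\frac{Y_{m-1}^j-Y_m^j}{\Delta N}\right).$$ Call the model collision-free if for every such leader trajectory and every initial configuration with $Y_{m-1}^0-Y_m^0\ge S\Delta N$ for all $m\ge1$, one has $Y_{m-1}^j-Y_m^j\ge S\Delta N$ for all $m\ge 1$ and all $j\ge0$. Then the model is collision-free if and only if $$\frac{\Delta N}{\Delta t}\ \ge\ \sup_{k\in[0,K)}\frac{\phi(k)}{1-k/K}.$$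
   Context: $\eta$ is the speed-density relation, $\phi$ the flow-density relation, $\theta$ the speed-spacing relation, $K$ the jam density and $S$ the jam spacing; the update rule is the time- and vehicle-discrete car-following formulation of the nonstandard second-order (LWR) model, with $\Delta N$ the vehicle step and $\Delta t$ the time step. *)

(* Defs.v *)
From Stdlib Require Import Reals Lra.
Open Scope R_scope.

Definition jam_spacing (K : R) : R := / K.

Definition phi (eta : R -> R) (k : R) : R := k * eta k.

Definition theta (eta : R -> R) (s : R) : R := eta (/ s).

(* Standing hypotheses on eta : (0,K] -> [0,oo) with eta(K) = 0.
   eta is a total function R -> R; values outside (0,K] are irrelevant. *)
Definition eta_admissible (K : R) (eta : R -> R) : Prop :=
  0 < K /\ (forall k, 0 < k <= K -> 0 <= eta k) /\ eta K = 0.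

(* Y m j = position of vehicle m at time j * dt; vehicle 0 is the leader. *)
Definition platoon_trajectory (eta : R -> R) (dt dN : R) (M : nat)
    (Y : nat -> nat -> R) : Prop :=
  (forall j, Y 0%nat j <= Y 0%nat (S j)) /\
  (forall m j, (1 <= m <= M)%nat ->
     Y m (S j) = Y m j + dt * theta eta ((Y (pred m) j - Y m j) / dN)).

Definition collision_free (K : R) (eta : R -> R) (dt dN : R) (M : nat) : Prop :=
  forall Y : nat -> nat -> R,
    platoon_trajectory eta dt dN M Y ->
    (forall m, (1 <= m <= M)%nat -> Y (pred m) 0%nat - Y m 0%nat >= jam_spacing K * dN) ->
    forall m j, (1 <= m <= M)%nat -> Y (pred m) j - Y m j >= jam_spacing K * dN.

(* Main.v *)
Require Import Defs.
From Stdlib Require Import Reals.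
From Stdlib Require Import Lra Lia.
Open Scope R_scope.

Lemma theta_nonneg K eta dN s : eta_admissible K eta -> 0 < dN ->
  s >= jam_spacing K * dN -> 0 <= theta eta (s / dN).
Proof.
  intros [HK [He _]] HdN Hs. unfold jam_spacing in Hs. unfold theta.
  assert (Hx : / K <= s / dN).
  { apply (Rmult_le_reg_r dN); auto. unfold Rdiv. rewrite Rmult_assoc, Rinv_l; lra. }
  assert (0 < / K) by (apply Rinv_0_lt_compat; auto).
  apply He. split.
  - apply Rinv_0_lt_compat; lra.
  - rewrite <- (Rinv_inv K). apply Rinv_le_contravar; auto.
Qed.

Lemma key K eta dt dN s : eta_admissible K eta -> 0 < dt -> 0 < dN ->
  (forall k, 0 <= k < K -> dN / dt >= phi eta k / (1 - k / K)) ->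
  s >= jam_spacing K * dN -> s - dt * theta eta (s / dN) >= jam_spacing K * dN.
Proof.
  intros [HK [He HeK]] Hdt HdN H Hs. unfold jam_spacing in *. unfold theta.
  assert (Hx : / K <= s / dN).
  { apply (Rmult_le_reg_r dN); auto. unfold Rdiv. rewrite Rmult_assoc, Rinv_l; lra. }
  assert (0 < / K) by (apply Rinv_0_lt_compat; auto).
  set (x := s / dN) in *.
  assert (Hs' : s = x * dN) by (unfold x; field; lra).
  assert (Hk0 : 0 < / x) by (apply Rinv_0_lt_compat; lra).
  assert (HkK : / x <= K).
  { rewrite <- (Rinv_inv K). apply Rinv_le_contravar; auto. }
  destruct (Req_dec (/ x) K) as [E|E].
  - rewrite E, HeK. lra.
  - assert (Hlt : / x < K) by lra.
    specialize (H (/ x) ltac:(lra)). unfold phi in H.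
    set (e := eta (/ x)) in *.
    assert (Hu : 0 < 1 - / x / K).
    { assert (/ x / K < 1); [|lra].
      apply (Rmult_lt_reg_r K); auto. unfold Rdiv. rewrite Rmult_assoc, Rinv_l; lra. }
    assert (HxK : 1 < x * K).
    { assert (0 < x) by lra.
      apply (Rmult_lt_compat_l x) in Hlt; auto. rewrite Rinv_r in Hlt; lra. }
    assert (eq1 : dN / dt * (dt * x * (1 - / x / K)) = x * dN - / K * dN) by (field; lra).
    assert (eq2 : (/ x * e) / (1 - / x / K) * (dt * x * (1 - / x / K)) = dt * e) by (field; lra).
    assert (Hp : 0 < dt * x * (1 - / x / K)).
    { apply Rmult_lt_0_compat; auto. apply Rmult_lt_0_compat; lra. }
    apply Rle_ge. apply Rge_le in H.
    apply (Rmult_le_compat_r (dt * x * (1 - / x / K))) in H; [|lra].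
    rewrite eq1, eq2 in H. lra.
Qed.

Fixpoint Yf (k dt dN : R) (eta : R -> R) (j : nat) : nat -> R :=
  match j with
  | O => fun m => dN / k - INR m * (dN / k)
  | S j' => fun m => match m with
            | O => dN / k
            | S m' => Yf k dt dN eta j' (S m') +
                 dt * theta eta ((Yf k dt dN eta j' m' - Yf k dt dN eta j' (S m')) / dN)
            end
  end.

Theorem theorem4p2 (K : R) (eta : R -> R) (dt dN : R) (M : nat) :
  eta_admissible K eta -> 0 < dt -> 0 < dN -> (1 <= M)%nat ->
  (collision_free K eta dt dN M <->
   (forall k, 0 <= k < K -> dN / dt >= phi eta k / (1 - k / K))).
Proof.
  intros Hadm Hdt HdN HM. split.
  - intros Hcf k [Hk0 HkK].
    destruct (Req_dec k 0) as [E|E].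
    + subst k. unfold phi. rewrite Rmult_0_l. unfold Rdiv at 2. rewrite Rmult_0_l.
      apply Rle_ge. apply Rlt_le. unfold Rdiv. apply Rmult_lt_0_compat; auto.
      apply Rinv_0_lt_compat; auto.
    + destruct (Rge_dec (dN / dt) (phi eta k / (1 - k / K))) as [G|G]; auto.
      exfalso. destruct Hadm as [HK [He HeK]] eqn:HH.
      assert (Hk : 0 < k) by lra.
      set (Y := fun m j => Yf k dt dN eta j m).
      assert (Y0 : forall j, Y O j = dN / k).
      { intros [|j]; unfold Y; simpl; [ring | reflexivity]. }
      assert (Hpl : platoon_trajectory eta dt dN M Y).
      { split.
        - intros j. rewrite !Y0. lra.
        - intros [|m] j Hm; [lia|]. simpl. reflexivity. }
      assert (Hinit : forall m, (1 <= m <= M)%nat ->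
                Y (pred m) 0%nat - Y m 0%nat >= jam_spacing K * dN).
      { intros [|m] Hm; [lia|]. change (dN/k - INR m*(dN/k) - (dN/k - INR (S m)*(dN/k)) >= jam_spacing K * dN). rewrite S_INR.
        unfold jam_spacing.
        assert (/ K < / k) by (apply Rinv_lt_contravar; nra).
        assert (E2 : dN / k - INR m * (dN / k) - (dN / k - (INR m + 1) * (dN / k)) = / k * dN)
          by (field; auto).
        rewrite E2. apply Rle_ge. apply Rmult_le_compat_r; lra. }
      specialize (Hcf Y Hpl Hinit 1%nat 1%nat ltac:(lia)).
      change (dN / k - (dN / k - INR 1 * (dN / k) + dt * eta (/ ((dN / k - INR 0 * (dN / k) - (dN / k - INR 1 * (dN / k))) / dN))) >= jam_spacing K * dN) in Hcf. simpl INR in Hcf.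
      assert (E1 : (dN / k - 0 * (dN / k) - (dN / k - 1 * (dN / k))) / dN = / k)
        by (field; split; lra).
      rewrite E1, Rinv_inv in Hcf. unfold phi, jam_spacing in *.
      apply Rnot_ge_lt in G.
      assert (Hkk : k / K < 1).
      { apply (Rmult_lt_reg_r K); auto. unfold Rdiv. rewrite Rmult_assoc, Rinv_l; lra. }
      assert (Hp : 0 < dt * (1 - k / K) / k).
      { unfold Rdiv. apply Rmult_lt_0_compat; [apply Rmult_lt_0_compat; lra|].
        apply Rinv_0_lt_compat; auto. }
      apply (Rmult_lt_compat_r _ _ _ Hp) in G.
      assert (eq1 : dN / dt * (dt * (1 - k / K) / k) = dN / k - / K * dN) by (field; lra).
      assert (eq2 : k * eta k / (1 - k / K) * (dt * (1 - k / K) / k) = dt * eta k) by (field; lra).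
      rewrite eq1, eq2 in G.
      assert (E0 : dN / k - 1 * (dN / k) = 0) by ring. rewrite E0 in Hcf. lra.
  - intros H Y [Hlead Hrec] Hinit m j. revert m. induction j as [|j IH].
    + exact Hinit.
    + intros m Hm. rewrite (Hrec m j Hm).
      destruct m as [|m]; [lia|]. simpl pred in *.
      destruct m as [|m].
      * simpl pred. specialize (Hlead j).
        pose proof (key K eta dt dN (Y 0%nat j - Y 1%nat j) Hadm Hdt HdN H (IH 1%nat Hm)).
        lra.
      * rewrite (Hrec (S m) j ltac:(lia)). simpl pred.
        pose proof (IH (S m) ltac:(lia)) as H1. simpl pred in H1.
        pose proof (theta_nonneg K eta dN _ Hadm HdN H1).
        pose proof (key K eta dt dN _ Hadm Hdt HdN H (IH (S (S m)) Hm)).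
        simpl pred in *. nra.
Qed.
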